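(* Let $m,N\ge1$, let $d$ be a positive divisor of $m$, and let $\chi$ be a Dirichlet character modulo $N$ with conductor $N_\chi$. Define $$\Sigma(N,m,d) = \sum_{\tau}\phi(\gcd(\tau,N/\tau))\,\chi(y_\tau),$$ where $\tau$ runs over positive divisors of $N$ such that $\gcd(\tau,N/\tau)$ divides $\gcd(N/N_\chi,\, d-m/d)$, and $y_\tau$ is an integer (unique modulo $\mathrm{lcm}(\tau,N/\tau)$) with $y_\tau\equiv d \pmod{\tau}$ and $y_\tau\equiv m/d\pmod{N/\tau}$. Then $|\Sigma(N,m,d)|\le \sqrt{N}\,2^{\omega(N)}$ always, and if $d\ne\sqrt m$ then $|\Sigma(N,m,d)|\le |d-m/d|\,2^{\omega(N)}$.
   Context: $\phi$ is Euler's totient function; $\omega(N)$ is the number of distinct prime divisors of $N$; $\gcd(a,0)=a$. *)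

(* Defs.v *)
From mathcomp Require Import all_boot all_order all_algebra all_field.
Set Implicit Arguments. Unset Strict Implicit. Unset Printing Implicit Defensive.
Import Order.TTheory GRing.Theory Num.Theory.
Local Open Scope ring_scope.

Definition dirichlet_char (N : nat) (chi : int -> algC) : Prop :=
  [/\ chi 1 = 1,
      (forall a b : int, chi (a * b) = chi a * chi b),
      (forall a : int, chi (a + N%:Z) = chi a) &
      (forall a : int, (chi a == 0) = ~~ coprimez a N%:Z)].

Definition induced_from (N : nat) (chi : int -> algC) (M : nat) : Prop :=
  forall a : int, coprimez a N%:Z -> (a == 1 %[mod M%:Z])%Z -> chi a = 1.

Definition is_conductor (N : nat) (chi : int -> algC) (M : nat) : Prop :=
  [/\ (0 < M)%N, (M %| N)%N, induced_from N chi M &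
      (forall M' : nat, (0 < M')%N -> (M' %| N)%N -> induced_from N chi M' ->
         (M <= M')%N)].

Definition omega (n : nat) : nat := size (primes n).

Definition sigma_cond (N Nchi m d t : nat) : bool :=
  ((gcdn t (N %/ t))%:Z %|
     gcdz (N %/ Nchi)%:Z (d%:Z - (m %/ d)%:Z))%Z.

(* Sigma(N,m,d) for a given choice y of the integers y_t. *)
Definition Sigma (N Nchi m d : nat) (chi : int -> algC) (y : nat -> int) : algC :=
  \sum_(t <- divisors N | sigma_cond N Nchi m d t)
     (totient (gcdn t (N %/ t)))%:R * chi (y t).

(* Main.v *)
Require Import Defs.
From mathcomp Require Import all_boot all_order all_algebra all_field.
From mathcomp Require Import cyclic.
Import Order.TTheory GRing.Theory Num.Theory.
Local Open Scope ring_scope.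
Set Implicit Arguments. Unset Strict Implicit.

Local Open Scope nat_scope.
Lemma partn_eq_on n (pi1 pi2 : nat_pred) :
  (forall p, p \in primes n -> (p \in pi1) = (p \in pi2)) -> n`_pi1 = n`_pi2.
Proof.
move=> H; rewrite /partn; rewrite big_mkcond [RHS]big_mkcond /=.
apply: eq_bigr => p _.
case: (boolP (p \in primes n)) => Hp; first by rewrite H.
by rewrite -logn_gt0 lt0n negbK in Hp; rewrite (eqP Hp) expn0; case: (_ \in _); case: (_ \in _).
Qed.

Lemma unitary_part n u : 0 < n -> u %| n -> coprime u (n %/ u) -> n`_\pi(u) = u.
Proof.
move=> n0 dv cop.
have u0 : 0 < u by apply: dvdn_gt0 dv.
have v0 : 0 < n %/ u by rewrite divn_gt0 // dvdn_leq.
rewrite -{1}(divnK dv) mulnC partnM // part_pnat_id ?pnat_pi // part_p'nat ?muln1 //.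
by rewrite -coprime_pi'.
Qed.

Lemma unitary_count n (s : seq nat) : 0 < n -> uniq s ->
  (forall u, u \in s -> u %| n /\ coprime u (n %/ u)) -> size s <= 2 ^ omega n.
Proof.
move=> n0 us Hs.
pose f u : {ffun 'I_(omega n) -> bool} := [ffun i : 'I_(omega n) => nth 0 (primes n) i \in primes u].
have inj : {in s &, injective f}.
  move=> u1 u2 h1 h2 e.
  case: (Hs _ h1) => d1 c1; case: (Hs _ h2) => d2 c2.
  rewrite -(unitary_part n0 d1 c1) -(unitary_part n0 d2 c2).
  apply: partn_eq_on => p pp.
  have hi : index p (primes n) < omega n by rewrite index_mem.
  have := congr1 (fun g : {ffun _ -> _} => g (Ordinal hi)) e; rewrite /f !ffunE /= nth_index //.
rewrite -(size_map f) -(card_uniqP _) ?(map_inj_in_uniq inj) //.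
apply: leq_trans (max_card _) _.
by rewrite card_ffun card_bool card_ord.
Qed.
Lemma omega_dvd n N : 0 < N -> n %| N -> omega n <= omega N.
Proof.
move=> N0 dv; apply: uniq_leq_size; first exact: primes_uniq.
move=> p; rewrite !mem_primes => /and3P[pp n0 pn].
by rewrite pp N0 (dvdn_trans pn dv).
Qed.

Lemma unit_decomp N t g : 0 < N -> t %| N -> gcdn t (N %/ t) = g ->
  [/\ 0 < g, t = (t %/ g) * g, N %/ t = (N %/ t %/ g) * g,
      N = (t %/ g) * (N %/ t %/ g) * (g * g) &
      coprime (t %/ g) (N %/ t %/ g)].
Proof.
move=> N0 dv hg.
have t0 : 0 < t by apply: dvdn_gt0 dv.
have g0 : 0 < g by rewrite -hg gcdn_gt0 t0.
have e1 : t = t %/ g * g by rewrite divnK // -hg dvdn_gcdl.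
have e2 : N %/ t = N %/ t %/ g * g by rewrite divnK // -hg dvdn_gcdr.
split=> //.
  by rewrite mulnACA -e1 -e2 mulnC divnK.
rewrite /coprime; apply/eqP.
have : gcdn (t %/ g) (N %/ t %/ g) * g = g by rewrite muln_gcdl -e1 -e2.
by move/(f_equal (fun x => x %/ g)); rewrite mulnK // divnn g0.
Qed.

Lemma count_g N g : 0 < N ->
  count (fun t => gcdn t (N %/ t) == g) (divisors N) <= 2 ^ omega N.
Proof.
move=> N0; rewrite -size_filter.
set s := filter _ _.
case Es : s => [|t0 s']; first by [].
rewrite -Es.
have : t0 \in s by rewrite Es inE eqxx.
rewrite mem_filter -dvdn_divisors // => /andP[/eqP g0 d0].
have [gpos _ _ eN _] := unit_decomp N0 d0 g0.
have gg0 : 0 < g * g by rewrite muln_gt0 gpos.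
have eN' : N %/ (g * g) = t0 %/ g * (N %/ t0 %/ g) by rewrite {1}eN mulnK.
have n0 : 0 < N %/ (g * g).
  by rewrite divn_gt0 // dvdn_leq // {1}eN dvdn_mull.
apply: (@leq_trans (2 ^ omega (N %/ (g * g)))); last first.
  by rewrite leq_pexp2l // omega_dvd // {2}eN eN' dvdn_mulr.
rewrite -(size_map (divn^~ g)); apply: unitary_count => //.
  rewrite map_inj_in_uniq ?filter_uniq ?divisors_uniq //.
  move=> a b; rewrite !mem_filter -!dvdn_divisors // => /andP[/eqP ga da] /andP[/eqP gb db] e.
  have [_ ea _ _ _] := unit_decomp N0 da ga.
  have [_ eb _ _ _] := unit_decomp N0 db gb.
  by rewrite ea eb e.
move=> u /mapP[t]; rewrite mem_filter -dvdn_divisors // => /andP[/eqP gt dt] ->.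
have [_ et _ eNt cop] := unit_decomp N0 dt gt.
have eNt' : N %/ (g*g) = t%/g * (N%/t%/g) by rewrite {1}eNt mulnK.
have u0 : 0 < t %/ g by have := dvdn_gt0 N0 dt; rewrite {1}et muln_gt0 => /andP[].
by rewrite eNt' mulKn ?dvdn_mulr.
Qed.
Lemma lcm_sq N a b : a * a %| N -> b * b %| N -> lcmn a b * lcmn a b %| N.
Proof.
move=> ha hb.
have hab : a * b %| N.
  rewrite -(@dvdn_pexp2r _ _ 2) // expnMn -!mulnn.
  by apply: dvdn_mul; rewrite mulnn.
rewrite muln_lcml dvdn_lcm !muln_lcmr !dvdn_lcm ha hb hab /=.
by rewrite mulnC hab.

Qed.

Lemma sum_P N E : 0 < N -> 0 < E -> E %| N ->
  exists L, [/\ L * L %| N, L %| E &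
    \sum_(g < N.+1 | (g * g %| N) && (g %| E)) totient g = L].
Proof.
move=> N0 E0 EN.
pose P (g : nat) := (g * g %| N) && (g %| E).
pose L := \big[lcmn/1]_(g < N.+1 | P g) g.
have PL : P L.
  apply: (big_ind P) => //; first by rewrite /P mul1n !dvd1n.
  move=> x y /andP[x1 x2] /andP[y1 y2]; apply/andP; split; first exact: lcm_sq.
  by rewrite dvdn_lcm x2.
case/andP: PL => L1 L2.
have L0 : 0 < L by apply: dvdn_gt0 L2.
have LN : L <= N by apply: leq_trans (dvdn_leq E0 L2) (dvdn_leq N0 EN).
exists L; split => //.
have := sum_totient_dvd L; rewrite (@big_ord_widen_cond _ _ _ L.+1 N.+1 (fun d => d %| L) totient) // => <-.
apply: eq_bigl => g.
apply/idP/idP.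
  move=> Pg; have gL : (g : nat) %| L by exact: (biglcmn_sup g Pg).
  by rewrite gL /= ltnS dvdn_leq.
case/andP => gL _; apply/andP; split.
  by apply: dvdn_trans L1; apply: dvdn_mul.
exact: dvdn_trans L2.
Qed.
Lemma comb N E L : 0 < N -> E %| N ->
  \sum_(g < N.+1 | (g * g %| N) && (g %| E)) totient g = L ->
  \sum_(t <- divisors N | gcdn t (N %/ t) %| E) totient (gcdn t (N %/ t))
    <= 2 ^ omega N * L.
Proof.
move=> N0 EN HL.
set G := fun t => gcdn t (N %/ t).
pose P (g : nat) := (g * g %| N) && (g %| E).
have step1 : \sum_(t <- divisors N | G t %| E) totient (G t) =
   \sum_(t <- divisors N) \sum_(g < N.+1) (if P g && (G t == g) then totient g else 0).
  rewrite big_mkcond; apply: eq_big_seq => t; rewrite -dvdn_divisors // => dt.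
  rewrite -big_mkcond /=.
  have Gle : G t < N.+1.
    by rewrite ltnS dvdn_leq // (dvdn_trans (dvdn_gcdl _ _) dt).
  case: ifP => GE.
    rewrite (big_pred1 (Ordinal Gle)) // => g.
    rewrite /= -val_eqE /= [in RHS]eq_sym.
    case: (G t =P g) => [eg|]; rewrite ?andbT ?andbF //.
    rewrite -eg.
    rewrite /P GE andbT.
    have [g0 _ _ eN _] := unit_decomp N0 dt (erefl (G t)).
    by apply/dvdnP; exists (t %/ G t * ((N %/ t) %/ G t)).
  symmetry; apply: big1 => g /andP[/andP[_ gE] /eqP eg].
  by rewrite eg gE in GE.
rewrite step1 exchange_big /=.
apply: (@leq_trans (\sum_(g < N.+1) (if P g then totient g * 2 ^ omega N else 0))).
  apply: leq_sum => g _.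
  case Pg : (P g) => /=; last by rewrite big1.
  rewrite -big_mkcond /= big_const_seq iter_addn_0.
  by rewrite leq_mul // count_g.
rewrite -big_mkcond /= -big_distrl /= -/P.
have -> : \sum_(g < N.+1 | P g) totient g = L by [].
by rewrite mulnC.
Qed.

Local Close Scope nat_scope.
Lemma chi_norm N chi : (1 <= N)%N -> dirichlet_char N chi -> forall a, `|chi a| <= 1.
Proof.
move=> N0 [c1 cM cP c0] a.
have cPn : forall (n : nat) b, chi (b + n%:Z * N%:Z) = chi b.
  elim=> [|n IH] b; first by rewrite mul0r addr0.
  by rewrite -addn1 PoszD mulrDl mul1r addrA cP IH.
have cPz : forall (k : int) b, chi (b + k * N%:Z) = chi b.
  move=> [n|n] b; first exact: cPn.
  by rewrite -[in RHS](subrK (n.+1%:Z * N%:Z) b) cPn NegzE mulNr.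
have cmod : forall b, chi b = chi (b %% N%:Z)%Z.
  by move=> b; rewrite {1}(divz_eq b N%:Z) addrC cPz.
have cX : forall b k, chi (b ^+ k) = chi b ^+ k.
  by move=> b; elim=> [|k IH]; rewrite ?expr0 ?c1 // !exprS cM IH.
case: (boolP (coprimez a N%:Z)) => cop; last first.
  by rewrite -c0 in cop; rewrite (eqP cop) normr0 ler01.
set k := totient N.
have k0 : (0 < k)%N by rewrite totient_gt0.
have Nn0 : N%:Z != 0 by rewrite eqz_nat -lt0n.
set b := `|(a %% N%:Z)%Z|%N.
have hb : (a %% N%:Z)%Z = b%:Z by rewrite /b gez0_abs // modz_ge0.
have copb : coprime b N.
  have : coprimez (a %% N%:Z)%Z N%:Z by rewrite /coprimez gcdz_modl.
  by rewrite hb coprimezE.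
have Eu := Euler_exp_totient copb.
have e1 : chi a ^+ k = 1.
  have hX : (b%:Z) ^+ k = (b ^ k)%N%:Z by rewrite -!natz natrX.
  rewrite -cX cmod -modzXm hb hX modz_nat -/k Eu -modz_nat -cmod //.
have : `|chi a| ^+ k == 1 by rewrite -normrX e1 normr1.
by rewrite pexpr_eq1 // => /eqP ->.
Qed.

Theorem lemma3p3 (m N d Nchi : nat) (chi : int -> algC) (y : nat -> int) :
  (1 <= m)%N -> (1 <= N)%N -> (0 < d)%N -> (d %| m)%N ->
  dirichlet_char N chi -> is_conductor N chi Nchi ->
  (forall t : nat, t \in divisors N -> sigma_cond N Nchi m d t ->
     (y t == d%:Z %[mod t%:Z])%Z /\ (y t == (m %/ d)%:Z %[mod (N %/ t)%:Z])%Z) ->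
  `|Sigma N Nchi m d chi y| <= sqrtC (N%:R) * 2%:R ^+ omega N /\
  ((d * d != m)%N ->
     `|Sigma N Nchi m d chi y| <= `|d%:R - (m %/ d)%:R : algC| * 2%:R ^+ omega N).
Proof.
move=> m1 N0 d0 dm dc [Nc0 NcN _ _] _.
set D : int := d%:Z - (m %/ d)%:Z.
set E := gcdn (N %/ Nchi) `|D|%N.
have condE : forall t, sigma_cond N Nchi m d t = (gcdn t (N %/ t) %| E)%N.
  by move=> t; rewrite /sigma_cond /dvdz /gcdz !absz_nat.
have NN0 : (0 < N %/ Nchi)%N by rewrite divn_gt0 // dvdn_leq.
have E0 : (0 < E)%N by rewrite gcdn_gt0 NN0.
have EN : (E %| N)%N.
  by apply: dvdn_trans (dvdn_gcdl _ _) _; rewrite -{2}(divnK NcN) dvdn_mulr.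
have [L [L1 L2 HL]] := sum_P N0 E0 EN.
have Hc := comb N0 EN HL.
have main : `|Sigma N Nchi m d chi y| <= (2%:R ^+ omega N * L%:R : algC).
  rewrite /Sigma; apply: le_trans (ler_norm_sum _ _ _) _.
  apply: (@le_trans _ _ (\sum_(t <- divisors N | sigma_cond N Nchi m d t)
             (totient (gcdn t (N %/ t)))%:R)).
    apply: ler_sum => t _; rewrite normrM normr_nat.
    by apply: ler_piMr => //; apply: chi_norm dc _.
  rewrite -natr_sum -natrX -natrM ler_nat.
  by under eq_bigl => t do rewrite condE.
split.
  apply: le_trans main _; rewrite mulrC ler_wpM2r // ?exprn_ge0 ?ler0n //.
  rewrite -(@sqrCK _ (L%:R : algC)) ?ler0n // ler_sqrtC ?qualifE /= ?exprn_ge0 ?ler0n //.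
  by rewrite -natrX ler_nat -mulnn dvdn_leq.
move=> ddm.
apply: le_trans main _; rewrite mulrC ler_wpM2r // ?exprn_ge0 ?ler0n //.
have D0 : D != 0.
  apply: contra ddm; rewrite subr_eq0 eqz_nat => /eqP e.
  by rewrite {2}e mulnC divnK.
have -> : (d%:R - (m %/ d)%:R : algC) = D%:~R by rewrite rmorphB.
rewrite -intr_norm -natr_absz ler_nat dvdn_leq ?absz_gt0 //.
exact: dvdn_trans L2 (dvdn_gcdr _ _).
Qed.
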